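(* Let $\alpha>-1/2$. There is a constant $C$ depending only on $\alpha$ such that for every $\varepsilon\in(0,1)$ and every $(\varepsilon,\alpha)$-thin set $S\subset\mathbb{R}^+$ the following hold: if $a\ge1$ and $b-a\ge\frac1a$, then $$\mu_\alpha(S\cap[a,b])\le C\varepsilon\,\mu_\alpha([a,b]);$$ and if $b>1$, then $$\mu_\alpha(S\cap[0,b])\le C\varepsilon\,\mu_\alpha([0,b]).$$
   Context: Fix $\alpha>-1/2$ and let $d\mu_\alpha(x)=(2\pi)^{\alpha+1}x^{2\alpha+1}\,dx$ on $\mathbb{R}^+=[0,\infty)$. For $\varepsilon\in(0,1)$, a measurable set $S\subset\mathbb{R}^+$ is called $(\varepsilon,\alpha)$-thin if $\mu_\alpha(S\cap[x,x+1])\le\varepsilon\,\mu_\alpha([x,x+1])$ for all $0\le x\le1$, and $\mu_\alpha(S\cap[x,x+\frac1x])\le\varepsilon\,\mu_\alpha([x,x+\frac1x])$ for all $x\ge2$. *)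

(* Defs.v *)
From HB Require Import structures.
From mathcomp Require Import all_boot all_order all_algebra.
From mathcomp Require Import all_classical all_reals all_analysis.
Set Implicit Arguments. Unset Strict Implicit. Unset Printing Implicit Defensive.
Import Order.TTheory GRing.Theory Num.Theory.
Local Open Scope classical_set_scope.
Local Open Scope ring_scope.

Definition wdens {R : realType} (alpha x : R) : R :=
  ((2 * pi) `^ (alpha + 1) * x `^ (2 * alpha + 1))%R.

Definition mu_alpha {R : realType} (alpha : R) (A : set R) : \bar R :=
  (\int[@lebesgue_measure R]_(x in A `&` `[0%R, +oo[) (wdens alpha x)%:E)%E.

Definition thin {R : realType} (eps alpha : R) (S : set R) : Prop :=
  (forall x : R, 0 <= x <= 1 ->
     (mu_alpha alpha (S `&` `[x, (x + 1)%R]) <= eps%:E * mu_alpha alpha `[x, (x + 1)%R])%E)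
  /\
  (forall x : R, 2 <= x ->
     (mu_alpha alpha (S `&` `[x, (x + x^-1)%R]) <= eps%:E * mu_alpha alpha `[x, (x + x^-1)%R])%E).

(* Main.v *)
Require Import Defs.
From HB Require Import structures.
From mathcomp Require Import all_boot all_order all_algebra.
From mathcomp Require Import all_classical all_reals all_analysis.
From mathcomp Require Import lra ring measurable_realfun.
Import Order.TTheory GRing.Theory Num.Theory.
Local Open Scope classical_set_scope.
Local Open Scope ring_scope.

Section S.
Context {R : realType} (alpha : R) (ha : - (1 / 2) < alpha).

Let W := wdens alpha.

Lemma beta_ge0 : 0 <= 2 * alpha + 1.
Proof. have h := ha. lra. Qed.

Lemma W_ge0 x : 0 <= W x.
Proof. by rewrite /W /wdens mulr_ge0 // powR_ge0. Qed.

Lemma W_mono x y : 0 <= x -> x <= y -> W x <= W y.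
Proof.
move=> x0 xy; rewrite /W /wdens ler_wpM2l ?powR_ge0 //.
apply: ge0_ler_powR => //; first exact: beta_ge0.
all: by rewrite nnegrE; lra.
Qed.

Lemma W_double x : 0 <= x -> W (2 * x) = 2 `^ (2 * alpha + 1) * W x.
Proof. move=> x0; rewrite /W /wdens [(2 * x) `^ _]powRM //; first ring. Qed.

Lemma W_meas D : measurable_fun D (fun x => (W x)%:E).
Proof.
change (measurable_fun D (EFin \o W)); apply/measurable_EFinP; apply: measurable_funM; first exact: measurable_cst.
exact: measurable_funTS (measurable_powR _).
Qed.

Lemma mu_ge0 A : (0 <= mu_alpha alpha A)%E.
Proof. by apply: integral_ge0 => x _; rewrite lee_fin W_ge0. Qed.

Lemma mu_mono A B : measurable A -> measurable B -> A `<=` B ->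
  (mu_alpha alpha A <= mu_alpha alpha B)%E.
Proof.
move=> mA mB AB; apply: ge0_subset_integral.
- exact: measurableI.
- exact: measurableI.
- exact: W_meas.
- by move=> x _; rewrite lee_fin W_ge0.
- exact: setSI.
Qed.

Lemma mu_add A B : measurable A -> measurable B -> [disjoint A & B] ->
  mu_alpha alpha (A `|` B) = (mu_alpha alpha A + mu_alpha alpha B)%E.
Proof.
move=> mA mB dAB; rewrite /mu_alpha setIUl ge0_integral_setU //.
- exact: measurableI.
- exact: measurableI.
- exact: W_meas.
- by move=> x _; rewrite lee_fin W_ge0.
- move/disj_setPS: dAB => dAB; apply/disj_setPS => x [[ax _] [bx _]].
  exact: dAB.
Qed.

Lemma itv0 (u v : R) : 0 <= u -> [set` `[u, v]] `&` [set` `[0, +oo[] = [set` `[u, v]].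
Proof.
move=> u0; apply/seteqP; split=> x /=; first by case.
move=> H; split => //; move: H; rewrite !in_itv /= andbT => /andP[ux _]; lra.
Qed.

Lemma leb_itv (u v : R) : u <= v -> lebesgue_measure `[u, v] = ((v - u)%:E)%E.
Proof.
move=> uv; rewrite lebesgue_measure_itv /= lte_fin.
case: (ltP u v) => h; first by rewrite EFinB.
have -> : v = u by apply/eqP; rewrite eq_le uv h.
by rewrite subrr.
Qed.

Lemma mu_itv_le {u v : R} : 0 <= u -> u <= v ->
  (mu_alpha alpha `[u, v] <= ((v - u) * W v)%:E)%E.
Proof.
move=> u0 uv; rewrite /mu_alpha itv0 //.
apply: (@le_trans _ _ (\int[lebesgue_measure]_(x in `[u, v]) (cst (W v)%:E x))%E).
  apply: ge0_le_integral => //.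
  all: try (by move=> x _; rewrite /= lee_fin W_ge0); try exact: W_meas.
  move=> x /=; rewrite in_itv /= => /andP[ux xv]; rewrite lee_fin.
    apply: W_mono => //; lra.
by rewrite integral_cst // [X in (_ * X)%E]leb_itv // -EFinM mulrC.
Qed.

Lemma mu_itv_ge {u v : R} : 0 <= u -> u <= v ->
  (((v - u) * W u)%:E <= mu_alpha alpha `[u, v])%E.
Proof.
move=> u0 uv; rewrite /mu_alpha itv0 //.
apply: (@le_trans _ _ (\int[lebesgue_measure]_(x in `[u, v]) (cst (W u)%:E x))%E).
  by rewrite integral_cst // [X in (_ * X)%E]leb_itv // -EFinM mulrC.
apply: ge0_le_integral => //.
all: try (by move=> x _; rewrite /= lee_fin W_ge0); try exact: W_meas.
move=> x /=; rewrite in_itv /= => /andP[ux xv]; rewrite lee_fin.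
  apply: W_mono => //; lra.
Qed.


Lemma mu_subadd A B : measurable A -> measurable B ->
  (mu_alpha alpha (A `|` B) <= mu_alpha alpha A + mu_alpha alpha B)%E.
Proof.
move=> mA mB.
have -> : A `|` B = A `|` (B `\` A).
  apply/seteqP; split=> x /=.
    case=> [ax|bx]; first by left.
    have [ax|nax] := pselect (A x); first by left.
    by right.
  by case=> [ax|[bx _]]; [left|right].
rewrite mu_add //; try exact: measurableD; last first.
  by apply/disj_setPS => x [ax [_ nax]].
rewrite leeD2l //; apply: mu_mono => //; first exact: measurableD.
Qed.

Definition mr (A : set R) : R := fine (mu_alpha alpha A).

Lemma mu_fin {A} {u w : R} : 0 <= u -> u <= w -> measurable A -> A `<=` `[u, w] ->
  mu_alpha alpha A = (mr A)%:E.
Proof.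
move=> u0 uw mA Auw; rewrite /mr fineK // ge0_fin_numE ?mu_ge0 //.
have mI : measurable [set` `[u, w]] by exact: measurable_itv.
apply: (le_lt_trans (mu_mono _ _ mA mI Auw)).
by apply: (le_lt_trans (mu_itv_le u0 uw)); rewrite ltey.
Qed.

Lemma mr_ge0 A : 0 <= mr A.
Proof. exact/fine_ge0/mu_ge0. Qed.

Lemma mr_mono {A B} {u w : R} : 0 <= u -> u <= w -> measurable A -> measurable B ->
  A `<=` B -> B `<=` `[u, w] -> mr A <= mr B.
Proof.
move=> u0 uw mA mB AB Buw.
have := mu_mono _ _ mA mB AB.
rewrite (mu_fin u0 uw mA (subset_trans AB Buw)) (mu_fin u0 uw mB Buw).
by rewrite lee_fin.
Qed.

Lemma mr_itv_le {u v : R} : 0 <= u -> u <= v -> mr `[u, v] <= (v - u) * W v.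
Proof.
move=> u0 uv; have := mu_itv_le u0 uv.
by rewrite (mu_fin u0 uv _ (@subset_refl _ _)) // lee_fin.
Qed.

Lemma mr_itv_ge {u v : R} : 0 <= u -> u <= v -> (v - u) * W u <= mr `[u, v].
Proof.
move=> u0 uv; have := mu_itv_ge u0 uv.
by rewrite (mu_fin u0 uv _ (@subset_refl _ _)) // lee_fin.
Qed.


Lemma mr_subadd {A B} {u w : R} : 0 <= u -> u <= w -> measurable A -> measurable B ->
  A `<=` `[u, w] -> B `<=` `[u, w] -> mr (A `|` B) <= mr A + mr B.
Proof.
move=> u0 uw mA mB Au Bu.
have := mu_subadd _ _ mA mB.
rewrite (mu_fin u0 uw mA Au) (mu_fin u0 uw mB Bu) (mu_fin u0 uw (measurableU _ _ mA mB)).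
  by rewrite -EFinD lee_fin.
by move=> x [/Au|/Bu].
Qed.

Lemma mr_add {A B} {u w : R} : 0 <= u -> u <= w -> measurable A -> measurable B ->
  A `<=` `[u, w] -> B `<=` `[u, w] -> [disjoint A & B] -> mr (A `|` B) = mr A + mr B.
Proof.
move=> u0 uw mA mB Au Bu dAB.
by rewrite /mr mu_add // (mu_fin u0 uw mA Au) (mu_fin u0 uw mB Bu).
Qed.

Lemma mr_superadd {u v w : R} : 0 <= u -> u <= v -> v <= w ->
  mr `[u, v] + mr `[v, w] <= mr `[u, w].
Proof.
move=> u0 uv vw.
have uw : u <= w by apply: le_trans uv vw.
have v0 : 0 <= v by apply: le_trans u0 uv.
have E1 : [set` `[u, w]] = [set` `[u, v]] `|` [set` `]v, w]].
  apply/seteqP; split=> x /=; rewrite !in_itv /=.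
    move=> /andP[ux xw]; case: (leP x v) => xv; [left|right]; apply/andP; split => //.
  by case=> /andP[h1 h2]; apply/andP; split; lra.
have E2 : [set` `[v, w]] `<=` [set` `[v, v]] `|` [set` `]v, w]].
  move=> x /=; rewrite !in_itv /= => /andP[vx xw].
  case: (leP x v) => xv; [left|right]; apply/andP; split => //; lra.
have s1 : [set` `[u, v]] `<=` [set` `[u, w]].
  by move=> x /=; rewrite !in_itv /= => /andP[h1 h2]; apply/andP; split; lra.
have s2 : [set` `]v, w]] `<=` [set` `[u, w]].
  by move=> x /=; rewrite !in_itv /= => /andP[h1 h2]; apply/andP; split; lra.
have s3 : [set` `[v, v]] `<=` [set` `[u, w]].
  by move=> x /=; rewrite !in_itv /= => /andP[h1 h2]; apply/andP; split; lra.
have s4 : [set` `[v, w]] `<=` [set` `[u, w]].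
  by move=> x /=; rewrite !in_itv /= => /andP[h1 h2]; apply/andP; split; lra.
have d : [disjoint [set` `[u, v]] & [set` `]v, w]]].
  by apply/disj_setPS => x [] /=; rewrite !in_itv /= => /andP[h1 h2] /andP[h3 h4]; lra.
rewrite E1 (mr_add u0 uw) //; try exact: measurable_itv.
rewrite lerD2l.
have h1 : mr [set` `[v, w]] <= mr ([set` `[v, v]] `|` [set` `]v, w]]).
  apply: (mr_mono u0 uw) => //; try exact: measurable_itv.
    by apply: measurableU; exact: measurable_itv.
  by move=> x [/s3|/s2].
have h2 := mr_subadd u0 uw (measurable_itv `[v, v]) (measurable_itv `]v, w]) s3 s2.
have h3 := mr_itv_le v0 (lexx v).
rewrite subrr mul0r in h3.
lra.
Qed.


Lemma glue (S : set R) (e u v w : R) : measurable S -> 0 <= e ->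
  0 <= u -> u <= v -> v <= w ->
  mr (S `&` `[u, v]) <= e * mr `[u, v] ->
  mr (S `&` `[v, w]) <= e * mr `[v, w] ->
  mr (S `&` `[u, w]) <= e * mr `[u, w].
Proof.
move=> mS e0 u0 uv vw h1 h2.
have uw : u <= w by apply: le_trans uv vw.
have m1 : measurable (S `&` [set` `[u, v]]) by apply: measurableI => //; exact: measurable_itv.
have m2 : measurable (S `&` [set` `[v, w]]) by apply: measurableI => //; exact: measurable_itv.
have m3 : measurable (S `&` [set` `[u, w]]) by apply: measurableI => //; exact: measurable_itv.
have s1 : S `&` [set` `[u, v]] `<=` [set` `[u, w]].
  by move=> x [_] /=; rewrite !in_itv /= => /andP[h3 h4]; apply/andP; split; lra.
have s2 : S `&` [set` `[v, w]] `<=` [set` `[u, w]].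
  by move=> x [_] /=; rewrite !in_itv /= => /andP[h3 h4]; apply/andP; split; lra.
have h3 : mr (S `&` [set` `[u, w]]) <= mr ((S `&` [set` `[u, v]]) `|` (S `&` [set` `[v, w]])).
  apply: (mr_mono u0 uw) => //.
  - exact: measurableU.
  - move=> x [Sx] /=; rewrite !in_itv /= => /andP[h3 h4].
    case: (leP x v) => xv; [left|right]; split => //; rewrite /= ?in_itv /=; apply/andP; split; lra.
  - by move=> x [/s1|/s2].
have h4 := mr_subadd u0 uw m1 m2 s1 s2.
have h5 := mr_superadd u0 uv vw.
nra.
Qed.

Lemma thin1 (e : R) (S : set R) (x : R) : thin e alpha S -> measurable S -> 0 <= x -> x <= 1 ->
  mr (S `&` `[x, x + 1]) <= e * mr `[x, x + 1].
Proof.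
move=> [t1 _] mS x0 x1; have := t1 x; rewrite x0 x1 => /(_ isT).
have xx : x <= x + 1 by lra.
rewrite (mu_fin x0 xx (measurable_itv _) (@subset_refl _ _)).
rewrite (mu_fin x0 xx); last 2 first.
- by apply: measurableI => //; exact: measurable_itv.
- by move=> y [].
by rewrite -EFinM lee_fin.
Qed.

Lemma thin2 (e : R) (S : set R) (x : R) : thin e alpha S -> measurable S -> 2 <= x ->
  mr (S `&` `[x, x + x^-1]) <= e * mr `[x, x + x^-1].
Proof.
move=> [_ t2] mS x2; have := t2 x x2.
have x0 : 0 <= x by lra.
have xx : x <= x + x^-1 by rewrite lerDl invr_ge0.
rewrite (mu_fin x0 xx (measurable_itv _) (@subset_refl _ _)).
rewrite (mu_fin x0 xx); last 2 first.
- by apply: measurableI => //; exact: measurable_itv.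
- by move=> y [].
by rewrite -EFinM lee_fin.
Qed.


Lemma mr_point (S : set R) (y : R) : 0 <= y -> measurable S -> mr (S `&` `[y, y]) <= 0.
Proof.
move=> y0 mS.
have yy : y <= y := lexx y.
have h1 : mr (S `&` [set` `[y, y]]) <= mr [set` `[y, y]].
  apply: (mr_mono y0 yy) => //.
  all: try (by apply: measurableI => //; exact: measurable_itv); try exact: measurable_itv; try (by move=> x []).
have h2 := mr_itv_le y0 yy.
rewrite subrr mul0r in h2; lra.
Qed.

Lemma chain (e : R) (S : set R) (y b : R) : thin e alpha S -> measurable S -> 0 <= e ->
  2 <= y -> y <= b ->
  exists z, [/\ b <= z, z <= b + y^-1 & mr (S `&` `[y, z]) <= e * mr `[y, z]].
Proof.
move=> tS mS e0 y2 yb.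
pose f := fun t : R => t + t^-1.
pose x := fun n => iter n f y.
have xS n : x n.+1 = x n + (x n)^-1 by [].
have xy n : y <= x n.
  elim: n => [|n IH]; first exact: lexx.
  rewrite xS; apply: (le_trans IH); rewrite lerDl invr_ge0; lra.
have x0 n : 0 < x n by have := xy n; lra.
have xinv n : x n * (x n)^-1 = 1 by rewrite mulfV // gt_eqF.
have xsq n : 2 * n%:R <= x n ^+ 2.
  elim: n => [|n IH]; first by rewrite mulr0 sqr_ge0.
  rewrite xS -natr1.
  have h1 := xinv n; have h2 : 0 <= (x n)^-1 by rewrite invr_ge0; exact: ltW.
  nra.
have P n : mr (S `&` `[y, x n]) <= e * mr `[y, x n].
  elim: n => [|n IH].
    have h0 : 0 <= y by lra.
    have := @mr_point S y h0 mS.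
    have := mr_ge0 [set` `[y, y]]; change (x 0) with y; nra.
  apply: (@glue S e y (x n) (x n.+1) mS e0) => //.
  all: try lra; try exact: xy.
  all: try (by rewrite xS lerDl invr_ge0; exact: ltW).
  by rewrite xS; apply: thin2 => //; apply: le_trans (xy n).
have exn : exists n, b <= x n.
  exists (Num.trunc (b ^+ 2)).+1.
  have h1 := truncnS_gt (b ^+ 2).
  have h2 := xsq (Num.trunc (b ^+ 2)).+1.
  have h3 := x0 (Num.trunc (b ^+ 2)).+1.
  have h4 : 0 <= ((Num.trunc (b ^+ 2)).+1)%:R :> R by [].
  nra.
case: (ex_minnP exn) => N hN hmin.
exists (x N); split => //.
case: N hN hmin => [|m] hN hmin.
  have : x 0 = y by [].
  have : 0 < y^-1 by rewrite invr_gt0; lra.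
  move: hN => /= hN; lra.
have hm : x m < b.
  rewrite ltNge; apply/negP => /hmin; rewrite ltnn //.
rewrite xS.
have h1 := xinv m.
have h2 : y * y^-1 = 1 by rewrite mulfV // gt_eqF //; lra.
have h3 : 0 <= y^-1 by rewrite invr_ge0; lra.
have h4 : 0 <= (x m)^-1 by rewrite invr_ge0; exact: ltW.
have h5 := xy m.
nra.
Qed.


Lemma split_le {u v w : R} : 0 <= u -> u <= v -> v <= w ->
  mr `[u, w] <= mr `[u, v] + mr `[v, w].
Proof.
move=> u0 uv vw.
have uw : u <= w by apply: le_trans uv vw.
have s1 : [set` `[u, v]] `<=` [set` `[u, w]].
  by move=> x /=; rewrite !in_itv /= => /andP[h1 h2]; apply/andP; split; lra.
have s2 : [set` `[v, w]] `<=` [set` `[u, w]].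
  by move=> x /=; rewrite !in_itv /= => /andP[h1 h2]; apply/andP; split; lra.
have h1 : mr [set` `[u, w]] <= mr ([set` `[u, v]] `|` [set` `[v, w]]).
  apply: (mr_mono u0 uw) => //; try exact: measurable_itv.
    by apply: measurableU; exact: measurable_itv.
  move=> x /=; rewrite !in_itv /= => /andP[h2 h3].
  case: (leP x v) => xv; [left|right]; rewrite /= ?in_itv /=; apply/andP; split; lra.
  by move=> x [/s1|/s2].
have h2 := mr_subadd u0 uw (measurable_itv `[u, v]) (measurable_itv `[v, w]) s1 s2.
lra.
Qed.

Lemma Z02 (e : R) (S : set R) : thin e alpha S -> measurable S -> 0 <= e ->
  mr (S `&` `[0, 2]) <= e * mr `[0, 2].
Proof.
move=> tS mS e0.
have h1 := @thin1 e S 0 tS mS (lexx 0) ler01.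
have h2 := @thin1 e S 1 tS mS ler01 (lexx 1).
rewrite add0r in h1.
have E : (1 + 1 : R) = 2 by [].
rewrite E in h2.
apply: (@glue S e 0 1 2) => //; lra.
Qed.

Lemma Zb (e : R) (S : set R) (b : R) : thin e alpha S -> measurable S -> 0 <= e ->
  2 <= b ->
  exists z, [/\ b <= z, z <= b + 2^-1 & mr (S `&` `[0, z]) <= e * mr `[0, z]].
Proof.
move=> tS mS e0 b2.
have [z [bz zb hz]] := @chain e S 2 b tS mS e0 (lexx 2) b2.
exists z; split => //.
apply: (@glue S e 0 2 z) => //; try lra.
exact: Z02.
Qed.

Lemma lowmid (a b : R) : 0 <= a -> a <= b -> (b - a) / 2 * W (b / 2) <= mr `[a, b].
Proof.
move=> a0 ab.
pose m := (a + b) / 2.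
have m0 : 0 <= m by rewrite /m; lra.
have am : a <= m by rewrite /m; lra.
have mb : m <= b by rewrite /m; lra.
have h1 := mr_itv_ge m0 mb.
have h2 : mr [set` `[m, b]] <= mr [set` `[a, b]].
  apply: (mr_mono a0 ab) => //; try exact: measurable_itv.
  by move=> x /=; rewrite !in_itv /= => /andP[h3 h4]; apply/andP; split; lra.
have h3 : W (b / 2) <= W m by apply: W_mono; rewrite /m; lra.
have h4 : 0 <= W (b / 2) by exact: W_ge0.
have -> : (b - a) / 2 = b - m by rewrite /m; field.
have : 0 <= b - m by lra.
nra.
Qed.


Lemma K_ge1 : 1 <= 2 `^ (2 * alpha + 1) :> R.
Proof.
rewrite -[X in X <= _](powRr0 2); apply: ler_powR; first lra.
exact: beta_ge0.
Qed.

Lemma Whalf (b : R) : 0 <= b -> W b = 2 `^ (2 * alpha + 1) * W (b / 2).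
Proof.
move=> b0; rewrite -W_double; last lra.
by congr W; field.
Qed.

Lemma main_sec :
  exists C : R,
    forall (eps : R), 0 < eps < 1 ->
    forall (S : set R), measurable S -> S `<=` `[0%R, +oo[ ->
      thin eps alpha S ->
      (forall a b : R, 1 <= a -> a^-1 <= b - a ->
         (mu_alpha alpha (S `&` `[a, b]) <= (C * eps)%:E * mu_alpha alpha `[a, b])%E)
      /\
      (forall b : R, 1 < b ->
         (mu_alpha alpha (S `&` `[0%R, b]) <= (C * eps)%:E * mu_alpha alpha `[0%R, b])%E).
Proof.
set K := 2 `^ (2 * alpha + 1).
have K1 : 1 <= K := K_ge1.
exists (16 * K ^+ 2) => e /andP[e0 e1] S mS _ tS.
have e0' : 0 <= e by exact: ltW.
have mSI (u v : R) : measurable (S `&` [set` `[u, v]]).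
  by apply: measurableI => //; exact: measurable_itv.
have sub0 (u v : R) : S `&` [set` `[u, v]] `<=` [set` `[u, v]] by move=> x [].
split.
- move=> a b a1 hab.
  have a0 : 0 < a by lra.
  have ainv : a * a^-1 = 1 by rewrite mulfV // gt_eqF.
  have ai0 : 0 < a^-1 by rewrite invr_gt0.
  have ab : a <= b by lra.
  have b2 : 2 <= b.
    case: (leP a 2) => ha2; last lra.
    nra.
  rewrite (mu_fin (ltW a0) ab (mSI a b) (sub0 a b)).
  rewrite (mu_fin (ltW a0) ab (measurable_itv _) (@subset_refl _ _)).
  rewrite -EFinM lee_fin.
  set M := mr [set` `[a, b]].
  have hM := lowmid a b (ltW a0) ab.
  rewrite -/M in hM.
  have hW := Whalf b (ltac:(lra) : 0 <= b).
  have Wb2 : 0 <= W (b / 2) := W_ge0 _.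
  have M0 : 0 <= M := mr_ge0 _.
  case: (leP 2 a) => a2.
  + have [z [bz zb hz]] := @chain e S a b tS mS e0' a2 ab.
    have az : a <= z by lra.
    have h1 : mr (S `&` [set` `[a, b]]) <= mr (S `&` [set` `[a, z]]).
      apply: (mr_mono (ltW a0) az) => //.
      by move=> x [Sx] /=; rewrite !in_itv /= => /andP[h3 h4]; split => //; rewrite /= ?in_itv /=; apply/andP; split; lra.
    have h2 := split_le (ltW a0) ab bz.
    have h3 := mr_itv_le (ltac:(lra) : 0 <= b) bz.
    have h4 : W z <= K * W b.
      rewrite /K -W_double; last lra.
      apply: W_mono; lra.
    have h5 : z - b <= b - a by lra.
    have h6 : 0 <= W z := W_ge0 _.
    have h7 : (z - b) * W z <= (b - a) * (K * W b).
      apply: ler_pM; lra.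
    rewrite hW in h7.
    have h8 : (b - a) * (K * (K * W (b / 2))) = 2 * K ^+ 2 * ((b - a) / 2 * W (b / 2)).
      by rewrite expr2; field.
    rewrite h8 in h7.
    have h9 : 2 * K ^+ 2 * ((b - a) / 2 * W (b / 2)) <= 2 * K ^+ 2 * M.
      apply: ler_wpM2l => //; rewrite mulr_ge0 // sqr_ge0 //.
    have hK2 : 1 <= K ^+ 2 by rewrite expr2; nra.
    rewrite -/M in h2.
    have h10 : mr [set` `[a, z]] <= (1 + 2 * K ^+ 2) * M by lra.
    have h11 : (1 + 2 * K ^+ 2) * M <= 16 * K ^+ 2 * M by nra.
    have h12 : mr [set` `[a, z]] <= 16 * K ^+ 2 * M by lra.
    have h13 : e * mr [set` `[a, z]] <= e * (16 * K ^+ 2 * M) by apply: ler_wpM2l.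
    lra.
  + have [z [bz zb hz]] := @Zb e S b tS mS e0' b2.
    have z0 : 0 <= z by lra.
    have h1 : mr (S `&` [set` `[a, b]]) <= mr (S `&` [set` `[0, z]]).
      apply: (mr_mono (lexx 0) z0) => //.
      by move=> x [Sx] /=; rewrite !in_itv /= => /andP[h3 h4]; split => //; rewrite /= ?in_itv /=; apply/andP; split; lra.
    have h3 := mr_itv_le (lexx 0) z0.
    have h4 : W z <= K * W b.
      rewrite /K -W_double; last lra.
      apply: W_mono; lra.
    have hba : 2^-1 <= b - a.
      have h : 1 <= 2 * a^-1 by nra.
      lra.
    have h5 : z <= 6 * (b - a) by lra.
    have h6 : 0 <= W z := W_ge0 _.
    have h7 : (z - 0) * W z <= (6 * (b - a)) * (K * W b).
      apply: ler_pM; lra.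
    rewrite hW in h7.
    have h8 : (6 * (b - a)) * (K * (K * W (b / 2))) = 12 * K ^+ 2 * ((b - a) / 2 * W (b / 2)).
      by rewrite expr2; field.
    rewrite h8 in h7.
    have h9 : 12 * K ^+ 2 * ((b - a) / 2 * W (b / 2)) <= 12 * K ^+ 2 * M.
      apply: ler_wpM2l => //; rewrite mulr_ge0 // sqr_ge0 //.
    have hK2 : 1 <= K ^+ 2 by rewrite expr2; nra.
    have hKM : 0 <= K ^+ 2 * M by rewrite mulr_ge0 // sqr_ge0.
    have h12 : mr [set` `[0, z]] <= 16 * K ^+ 2 * M by lra.
    have h13 : e * mr [set` `[0, z]] <= e * (16 * K ^+ 2 * M) by apply: ler_wpM2l.
    lra.
- move=> b b1.
  have b0 : 0 <= b by lra.
  rewrite (mu_fin (lexx 0) b0 (mSI 0 b) (sub0 0 b)).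
  rewrite (mu_fin (lexx 0) b0 (measurable_itv _) (@subset_refl _ _)).
  rewrite -EFinM lee_fin.
  set M := mr [set` `[0, b]].
  have hM := lowmid 0 b (lexx 0) b0.
  rewrite subr0 -/M in hM.
  have hW := Whalf b b0.
  have Wb2 : 0 <= W (b / 2) := W_ge0 _.
  have M0 : 0 <= M := mr_ge0 _.
  have hK2 : 1 <= K ^+ 2 by rewrite expr2; nra.
  case: (leP 2 b) => b2.
  + have [z [bz zb hz]] := @Zb e S b tS mS e0' b2.
    have z0 : 0 <= z by lra.
    have h1 : mr (S `&` [set` `[0, b]]) <= mr (S `&` [set` `[0, z]]).
      apply: (mr_mono (lexx 0) z0) => //.
      by move=> x [Sx] /=; rewrite !in_itv /= => /andP[h3 h4]; split => //; rewrite /= ?in_itv /=; apply/andP; split; lra.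
    have h3 := mr_itv_le (lexx 0) z0.
    have h4 : W z <= K * W b.
      rewrite /K -W_double; last lra.
      apply: W_mono; lra.
    have h6 : 0 <= W z := W_ge0 _.
    have h7 : (z - 0) * W z <= (2 * b) * (K * W b).
      apply: ler_pM; lra.
    rewrite hW in h7.
    have h8 : (2 * b) * (K * (K * W (b / 2))) = 4 * K ^+ 2 * (b / 2 * W (b / 2)).
      by rewrite expr2; field.
    rewrite h8 in h7.
    have h9 : 4 * K ^+ 2 * (b / 2 * W (b / 2)) <= 4 * K ^+ 2 * M.
      apply: ler_wpM2l => //; rewrite mulr_ge0 // sqr_ge0 //.
    have hKM : 0 <= K ^+ 2 * M by rewrite mulr_ge0 // sqr_ge0.
    have h12 : mr [set` `[0, z]] <= 16 * K ^+ 2 * M by lra.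
    have h13 : e * mr [set` `[0, z]] <= e * (16 * K ^+ 2 * M) by apply: ler_wpM2l.
    lra.
  + have z0 : (0 : R) <= 2 by lra.
    have h1 : mr (S `&` [set` `[0, b]]) <= mr (S `&` [set` `[0, 2]]).
      apply: (mr_mono (lexx 0) z0) => //.
      by move=> x [Sx] /=; rewrite !in_itv /= => /andP[h3 h4]; split => //; rewrite /= ?in_itv /=; apply/andP; split; lra.
    have hz := @Z02 e S tS mS e0'.
    have h3 := mr_itv_le (lexx 0) z0.
    have W2 : W 2 <= K ^+ 2 * W (b / 2).
      have -> : (2 : R) = 2 * (2 * (1 / 2)) by field.
      rewrite W_double; last lra.
      rewrite W_double; last lra.
      rewrite -/K expr2 -mulrA; apply: ler_wpM2l; first lra.
      apply: ler_wpM2l; first lra.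
      apply: W_mono; lra.
    have h7 : (2 - 0) * W 2 <= 2 * (K ^+ 2 * W (b / 2)) by lra.
    have h9 : 2 * (K ^+ 2 * W (b / 2)) <= 4 * K ^+ 2 * (b / 2 * W (b / 2)).
      have hp : 0 <= K ^+ 2 * W (b / 2) by rewrite mulr_ge0 // sqr_ge0.
      have hq : 0 <= (b - 1) * (K ^+ 2 * W (b / 2)) by rewrite mulr_ge0 //; lra.
      have -> : 4 * K ^+ 2 * (b / 2 * W (b / 2)) = 2 * (K ^+ 2 * W (b / 2)) + 2 * ((b - 1) * (K ^+ 2 * W (b / 2))) by field.
      lra.
    have h10 : 4 * K ^+ 2 * (b / 2 * W (b / 2)) <= 4 * K ^+ 2 * M.
      apply: ler_wpM2l => //; rewrite mulr_ge0 // sqr_ge0 //.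
    have hKM : 0 <= K ^+ 2 * M by rewrite mulr_ge0 // sqr_ge0.
    have h12 : mr [set` `[0, 2]] <= 16 * K ^+ 2 * M by lra.
    have h13 : e * mr [set` `[0, 2]] <= e * (16 * K ^+ 2 * M) by apply: ler_wpM2l.
    lra.
Qed.

End S.

Theorem lemma5p2 (R : realType) (alpha : R) (halpha : - (1 / 2) < alpha) :
  exists C : R,
    forall (eps : R), 0 < eps < 1 ->
    forall (S : set R), measurable S -> S `<=` `[0%R, +oo[ ->
      thin eps alpha S ->
      (forall a b : R, 1 <= a -> a^-1 <= b - a ->
         (mu_alpha alpha (S `&` `[a, b]) <= (C * eps)%:E * mu_alpha alpha `[a, b])%E)
      /\
      (forall b : R, 1 < b ->
         (mu_alpha alpha (S `&` `[0%R, b]) <= (C * eps)%:E * mu_alpha alpha `[0%R, b])%E).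
Proof. exact: (@main_sec R alpha halpha). Qed.
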